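(* Let $N$ be a positive integer and define polynomials $P_n(x),Q_n(x)$ ($n\ge0$) by $P_0=1$, $P_1=(N+1)-x$, $Q_0=1$, $Q_1=N+1$, and for $n\ge2$ $$P_n=a_nP_{n-1}+b_nP_{n-2},\qquad Q_n=a_nQ_{n-1}+b_nQ_{n-2},$$ where $a_n=N+n$, $b_{2m}=mx$ and $b_{2m+1}=-(N+m)x$ for $m\ge1$. Then for every $n\ge1$: $$P_{2n-1}(x)=\sum_{j=0}^{n}(-1)^j\binom{n}{j}\prod_{l=1}^{2n-j-1}(N+l)\cdot x^j,\qquad P_{2n}(x)=\sum_{j=0}^{n}(-1)^j\binom{n}{j}\prod_{l=1}^{2n-j}(N+l)\cdot x^j,$$ $$Q_{2n-1}(x)=\sum_{j=0}^{n-1}\sum_{k=0}^{j}(-1)^{j-k}(2n-j-1)_k\binom{n-k-1}{j-k}\prod_{l=k+1}^{2n-j-1}(N+l)\cdot x^j,$$ $$Q_{2n}(x)=\sum_{j=0}^{n}\sum_{k=0}^{j}(-1)^{j-k}(2n-j)_k\binom{n-k-1}{j-k}\prod_{l=k+1}^{2n-j}(N+l)\cdot x^j.$$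
   Context: $(y)_k=y(y-1)\cdots(y-k+1)$ denotes the falling factorial, $(y)_0=1$. Conventions: $\binom{a}{k}=0$ for integers $0\le a<k$, $\binom{-1}{0}=1$, and an empty product equals $1$. The quotients $P_n(x)/Q_n(x)$ are the convergents of the continued fraction expansion $\frac{x^N/N!}{e^x-\sum_{i=0}^{N-1}x^i/i!}=1-\cfrac{x}{N+1+\cfrac{x}{N+2-\cfrac{(N+1)x}{N+3+\cfrac{2x}{N+4-\cdots}}}}$. *)

(* Defs.v *)
From mathcomp Require Import all_boot all_order all_algebra.
Set Implicit Arguments. Unset Strict Implicit. Unset Printing Implicit Defensive.
Import Order.TTheory GRing.Theory Num.Theory.
Local Open Scope ring_scope.

Definition cf_a (N n : nat) : {poly int} := (N + n)%:R.

(* b_{2m} = m x,  b_{2m+1} = -(N+m) x  (only used for n >= 2) *)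
Definition cf_b (N n : nat) : {poly int} :=
  if odd n then - ((N + n./2)%:R *: 'X) else (n./2)%:R *: 'X.

(* cf_rec N u0 u1 n = (U_n, U_{n+1}) where U_0 = u0, U_1 = u1 and
   U_n = a_n U_{n-1} + b_n U_{n-2} for n >= 2. *)
Fixpoint cf_rec (N : nat) (u0 u1 : {poly int}) (n : nat) : {poly int} * {poly int} :=
  match n with
  | 0%N => (u0, u1)
  | n'.+1 => let: (p, q) := cf_rec N u0 u1 n' in
             (q, cf_a N n'.+2 * q + cf_b N n'.+2 * p)
  end.

Definition cfP (N n : nat) : {poly int} := (cf_rec N 1 ((N + 1)%:R - 'X) n).1.
Definition cfQ (N n : nat) : {poly int} := (cf_rec N 1 (N + 1)%:R n).1.

(* Main.v *)
Require Import Defs.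
From mathcomp Require Import all_boot all_order all_algebra.
Import Order.TTheory GRing.Theory Num.Theory.
Local Open Scope ring_scope.
From mathcomp Require Import ring zify.

Section Aux.
Variable N : nat.

Definition Rp (k s : nat) : nat := (\prod_(k.+1 <= l < s.+1) (N + l))%N.
Definition U (s k : nat) : nat := (s ^_ k * Rp k s)%N.

Lemma Rp_nil k s : (s <= k)%N -> Rp k s = 1%N.
Proof. by move=> h; rewrite /Rp big_geq. Qed.

Lemma RpS k s : (k <= s)%N -> Rp k s.+1 = (Rp k s * (N + s.+1))%N.
Proof. by move=> h; rewrite /Rp big_nat_recr. Qed.

Lemma RpL k s : (k < s)%N -> Rp k s = ((N + k.+1) * Rp k.+1 s)%N.
Proof. by move=> h; rewrite /Rp big_ltn. Qed.

Lemma U_S0 s : U s.+1 0 = ((N + s.+1) * U s 0)%N.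
Proof. rewrite /U !ffactn0 RpS // !mul1n mulnC. reflexivity. Qed.

Lemma U_SS s k : U s.+1 k.+1 = ((N + s.+1 + k.+1) * U s k.+1 + k.+1 * U s k)%N.
Proof.
rewrite /U; case: (ltngtP k s) => h.
- rewrite ffactSS ffactnSr RpS // (RpL _ _ h).
  set a := s ^_ k; set b := Rp k.+1 s.
  have [d ->] : exists d, s = (d + k)%N by exists (s - k)%N; rewrite subnK // ltnW.
  rewrite addnK. ring.
- rewrite !ffact_small ?ltnS //; lia.
- subst k. rewrite ffactnn (ffact_small (ltnSn s)) ffactnn !Rp_nil // factS. ring.
Qed.


Definition qc (m n j : nat) : int := \sum_(0 <= k < j.+1)
  ((-1) ^+ (j - k) * ((m - j) ^_ k * 'C(n - k - 1, j - k)
     * \prod_(k.+1 <= l < (m - j).+1) (N + l))%N%:R).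

Lemma qcE m n j : qc m n j =
  \sum_(0 <= k < j.+1) (-1) ^+ (j - k) * (U (m - j) k)%:R * ('C(n - k - 1, j - k))%:R.
Proof.
apply: eq_bigr => k _; rewrite -mulrA -natrM; congr (_ * _%:R).
by rewrite /U /Rp mulnAC.
Qed.

Lemma expand s i (B : nat -> int) :
  \sum_(0 <= k < i.+2) (-1) ^+ (i.+1 - k) * (U s.+1 k)%:R * B k =
  \sum_(0 <= k < i.+2) (-1) ^+ (i.+1 - k) * ((N + s.+1 + k) * U s k)%N%:R * B k
  + \sum_(0 <= k < i.+1) (-1) ^+ (i - k) * (k.+1 * U s k)%N%:R * B k.+1.
Proof.
rewrite [LHS]big_nat_recl // [X in _ = X + _]big_nat_recl // -addrA.
congr (_ + _); first by rewrite subn0 U_S0 addn0.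
rewrite -big_split /=; apply: eq_bigr => k _.
by rewrite U_SS subSS natrD mulrDr mulrDl.
Qed.


Lemma qc_vanish m n j : (n <= j)%N -> (m < n + j)%N -> qc m n j = 0.
Proof.
move=> h1 h2; rewrite /qc big_nat_cond big1 // => k /andP[/andP[_ hk] _].
have : (n - k - 1 < j - k)%N || (m - j < k)%N by lia.
case/orP => h; first by rewrite bin_small // muln0 mul0n mulr0.
by rewrite ffact_small // !mul0n mulr0.
Qed.

Lemma natS (n : nat) : (n.+1%:R : int) = n%:R + 1.
Proof. by rewrite -addn1 natrD. Qed.

Lemma qcI n i : qc n.*2.+2 n.+1 i.+1 =
  (N + n.*2.+2)%:R * qc n.*2.+1 n.+1 i.+1 + (n.+1)%:R * qc n.*2 n i.
Proof.
case: (leqP i n.*2) => hi; last by rewrite !qc_vanish ?mulr0 ?addr0 //; lia.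
set s := (n.*2 - i)%N.
have e1 : (n.*2.+2 - i.+1 = s.+1)%N by rewrite /s; lia.
have e2 : (n.*2.+1 - i.+1 = s)%N by rewrite /s; lia.
have e3 : (n.*2 - i = s)%N by [].
rewrite !qcE e1 e2 e3.
rewrite (expand s i (fun k => ('C(n.+1 - k - 1, i.+1 - k))%:R)) /=.
rewrite !big_distrr /=.
rewrite [X in X + _ = _]big_nat_recr // [X in _ = X + _]big_nat_recr //=.
have hl : (N + s.+1 + i.+1 = N + n.*2.+2)%N by rewrite /s; lia.
rewrite hl addrAC [RHS]addrAC -!big_split /=.
congr (_ + _); last by rewrite natrM; ring.
rewrite big_nat_cond [RHS]big_nat_cond; apply: eq_bigr => k /andP[/andP[_ hk] _].
have hs : (s + i = n.*2)%N by rewrite /s; lia.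
rewrite !subSS subSn // exprS.
case: (leqP k n) => hkn.
- set a := (n - k)%N; set b := (i - k)%N.
  rewrite (_ : (n.+1 - k - 1 = a)%N); last by rewrite /a; lia.
  rewrite (_ : (n - k - 1 = a.-1)%N); last by rewrite /a; lia.
  have hA := mul_bin_diag a b.
  rewrite (_ : (N + n.*2.+2 = N + s + b + k + 2)%N); last by rewrite /b; lia.
  rewrite (_ : (n.+1 = a + k + 1)%N); last by rewrite /a; lia.
  have hA' : (a%:R * ('C(a.-1, b))%:R : int) = (b%:R + 1) * ('C(a, b.+1))%:R.
    by rewrite -natS -!natrM hA.
  move: (U s k) => u.
  rewrite !natrM !natrD !natS.
  apply/eqP; rewrite -subr_eq0; apply/eqP.
  transitivity ((-1) ^+ b * u%:R * (1 : int) *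
    ((b%:R + 1) * ('C(a, b.+1))%:R - a%:R * ('C(a.-1, b))%:R)); first ring.
  by rewrite hA' subrr mulr0.
- rewrite (_ : (n.+1 - k - 1 = 0)%N); last by lia.
  rewrite (_ : (n - k - 1 = 0)%N); last by lia.
  rewrite bin0n /= mulr0 mulr0 mulr0 add0r.
  have : (U s k == 0)%N || ('C(0, i - k) == 0)%N.
    case: (ltngtP k i) => h; last 2 first.
    + by lia.
    + subst k; rewrite /U ffact_small //; rewrite /s; lia.
    + by rewrite bin0n; apply/orP; right; lia.
  by case/orP => /eqP ->; rewrite ?mul0n ?muln0 ?mulr0n ?mulr0 ?mul0r ?add0r ?mulr0.
Qed.

Lemma qcII n i : qc n.*2.+3 n.+2 i.+1 =
  (N + n.*2.+3)%:R * qc n.*2.+2 n.+1 i.+1 - (N + n.+1)%:R * qc n.*2.+1 n.+1 i.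
Proof.
case: (leqP i n.*2.+1) => hi; last by rewrite !qc_vanish ?mulr0 ?subrr //; lia.
set s := (n.*2.+1 - i)%N.
have e1 : (n.*2.+3 - i.+1 = s.+1)%N by rewrite /s; lia.
have e2 : (n.*2.+2 - i.+1 = s)%N by rewrite /s; lia.
have e3 : (n.*2.+1 - i = s)%N by [].
rewrite !qcE e1 e2 e3.
rewrite (expand s i (fun k => ('C(n.+2 - k - 1, i.+1 - k))%:R)) /=.
rewrite !big_distrr /= -sumrN.
rewrite [X in X + _ = _]big_nat_recr // [X in _ = X + _]big_nat_recr //=.
have hl : (N + s.+1 + i.+1 = N + n.*2.+3)%N by rewrite /s; lia.
rewrite hl addrAC [RHS]addrAC -!big_split /=.
congr (_ + _); last by rewrite !subnn !bin0 natrM; ring.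
rewrite big_nat_cond [RHS]big_nat_cond; apply: eq_bigr => k /andP[/andP[_ hk] _].
have hs : (s + i = n.*2.+1)%N by rewrite /s; lia.
rewrite !subSS subSn // exprS.
case: (leqP k n) => hkn.
- set a := (n - k)%N; set b := (i - k)%N.
  rewrite (_ : (n.+1 - k - 1 = a)%N); last by rewrite /a; lia.
  rewrite (_ : (n.+2 - k - 1 = a.+1)%N); last by rewrite /a; lia.
  rewrite binS.
  have hA : (b.+1 * 'C(a, b.+1) + b * 'C(a, b) = a * 'C(a, b))%N.
    case: (leqP b a) => h; first by rewrite mul_bin_left -mulnDl subnK.
    by rewrite !bin_small // ?muln0; lia.
  rewrite (_ : (N + n.*2.+3 = N + s + b + k + 2)%N); last by rewrite /b; lia.
  rewrite (_ : (N + n.+1 = N + a + k + 1)%N); last by rewrite /a; lia.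
  have hsR : (s%:R : int) = 2 * a%:R + k%:R + 1 - b%:R.
    have -> : (s = 2 * a + k + 1 - b)%N by rewrite /s /a /b; lia.
    rewrite natrB; last by rewrite /a /b; lia.
    by rewrite !natrD; ring.
  have hA' : ((b%:R + 1) * ('C(a, b.+1))%:R + b%:R * ('C(a, b))%:R : int)
             = a%:R * ('C(a, b))%:R.
    by rewrite -natS -!natrM -natrD hA.
  move: (U s k) => u.
  rewrite !natrM !natrD !natS hsR.
  apply/eqP; rewrite -subr_eq0; apply/eqP.
  transitivity ((-1) ^+ b * u%:R * (1 : int) *
    ((b%:R + 1) * ('C(a, b.+1))%:R + b%:R * ('C(a, b))%:R - a%:R * ('C(a, b))%:R));
    first ring.
  by rewrite hA' subrr mulr0.
- rewrite (_ : (n.+2 - k - 1 = 0)%N); last by lia.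
  rewrite (_ : (n.+1 - k - 1 = 0)%N); last by lia.
  rewrite bin0n /= mulr0 mulr0 mulr0 add0r.
  have : (U s k == 0)%N || ('C(0, i - k) == 0)%N.
    case: (ltngtP k i) => h; last 2 first.
    + by lia.
    + subst k; rewrite /U ffact_small //; rewrite /s; lia.
    + by rewrite bin0n; apply/orP; right; lia.
  by case/orP => /eqP ->; rewrite ?mul0n ?muln0 ?mulr0n ?mulr0 ?mul0r ?add0r ?mulr0 ?oppr0.
Qed.

Definition pc (m n j : nat) : int := (-1) ^+ j * ('C(n, j) * Rp 0 (m - j))%N%:R.

Lemma pc0 m n : pc m n 0 = (Rp 0 m)%:R.
Proof. by rewrite /pc expr0 mul1r subn0 bin0 mul1n. Qed.

Lemma qc0 m n : qc m n 0 = (Rp 0 m)%:R.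
Proof. by rewrite /qc big_nat1 expr0 mul1r subn0 ffactn0 bin0 !mul1n. Qed.

Lemma pcI n i : pc n.*2.+2 n.+1 i.+1 =
  (N + n.*2.+2)%:R * pc n.*2.+1 n.+1 i.+1 + (n.+1)%:R * pc n.*2 n i.
Proof.
case: (leqP i n) => hi; last first.
  by rewrite /pc !bin_small ?ltnS // ?mul0n ?mulr0n ?mulr0 ?addr0.
set s := (n.*2 - i)%N.
have e1 : (n.*2.+2 - i.+1 = s.+1)%N by rewrite /s; lia.
have e2 : (n.*2.+1 - i.+1 = s)%N by rewrite /s; lia.
have e3 : (n.*2 - i = s)%N by [].
rewrite /pc e1 e2 e3 RpS // exprS.
have hA := mul_bin_diag n.+1 i; rewrite /= in hA.
have hA' : ((n%:R + 1) * ('C(n, i))%:R : int) = (i%:R + 1) * ('C(n.+1, i.+1))%:R.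
  by rewrite -!natS -!natrM hA.
rewrite (_ : (N + n.*2.+2 = N + s + i + 2)%N); last by rewrite /s; lia.
move: (Rp 0 s) ('C(n.+1, i.+1)) ('C(n, i)) hA' => G C2 C1 hA'.
rewrite !natrM !natrD !natS.
apply/eqP; rewrite -subr_eq0; apply/eqP.
transitivity ((-1) ^+ i * G%:R * (1 : int) *
  ((i%:R + 1) * C2%:R - (n%:R + 1) * C1%:R)); first ring.
by rewrite hA' subrr mulr0.
Qed.

Lemma pcII n i : pc n.*2.+3 n.+2 i.+1 =
  (N + n.*2.+3)%:R * pc n.*2.+2 n.+1 i.+1 - (N + n.+1)%:R * pc n.*2.+1 n.+1 i.
Proof.
case: (leqP i n.+1) => hi; last first.
  by rewrite /pc !bin_small ?ltnS // ?mul0n ?mulr0n ?mulr0 ?subr0 //; apply: ltnW.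
set s := (n.*2.+1 - i)%N.
have e1 : (n.*2.+3 - i.+1 = s.+1)%N by rewrite /s; lia.
have e2 : (n.*2.+2 - i.+1 = s)%N by rewrite /s; lia.
have e3 : (n.*2.+1 - i = s)%N by [].
rewrite /pc e1 e2 e3 RpS // exprS binS.
have hA : (i.+1 * 'C(n.+1, i.+1) + i * 'C(n.+1, i) = n.+1 * 'C(n.+1, i))%N.
  by rewrite mul_bin_left -mulnDl subnK.
have hA' : ((i%:R + 1) * ('C(n.+1, i.+1))%:R + i%:R * ('C(n.+1, i))%:R : int)
     = (n%:R + 1) * ('C(n.+1, i))%:R.
  by rewrite -!natS -!natrM -natrD hA.
have hsR : (s%:R : int) = 2 * n%:R + 1 - i%:R.
  rewrite /s natrB; last by lia.
  by rewrite -addn1 natrD -mul2n natrM.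
rewrite (_ : (N + n.*2.+3 = N + s + i + 2)%N); last by rewrite /s; lia.
move: (Rp 0 s) ('C(n.+1, i.+1)) ('C(n.+1, i)) hA' => G C2 C1 hA'.
rewrite !natrM !natrD !natS hsR.
apply/eqP; rewrite -subr_eq0; apply/eqP.
transitivity ((-1) ^+ i * G%:R * (1 : int) *
  ((i%:R + 1) * C2%:R + i%:R * C1%:R - (n%:R + 1) * C1%:R)); first ring.
by rewrite hA' subrr mulr0.
Qed.

Lemma cf_recS (u0 u1 : {poly int}) m : (cf_rec N u0 u1 m.+2).1 =
  cf_a N m.+2 * (cf_rec N u0 u1 m.+1).1 + cf_b N m.+2 * (cf_rec N u0 u1 m).1.
Proof. by rewrite /=; case: (cf_rec N u0 u1 m). Qed.

Lemma coef_a M (p : {poly int}) i : (cf_a N M * p)`_i = (N + M)%:R * p`_i.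
Proof. by rewrite /cf_a mulr_natl coefMn mulr_natl. Qed.

Lemma coef_b_even n (p : {poly int}) i :
  (cf_b N n.*2.+2 * p)`_i = if i is i'.+1 then (n.+1)%:R * p`_i' else 0.
Proof.
rewrite /cf_b /= odd_double /= doubleK -scalerAl coefZ coefXM.
by case: i => [|i] /=; rewrite ?mulr0.
Qed.

Lemma coef_b_odd n (p : {poly int}) i :
  (cf_b N n.*2.+3 * p)`_i = if i is i'.+1 then - (N + n.+1)%:R * p`_i' else 0.
Proof.
rewrite /cf_b /= odd_double /= uphalf_double mulNr -scalerAl coefN coefZ coefXM.
by case: i => [|i] /=; rewrite ?mulr0 ?oppr0 ?mulNr.
Qed.

Lemma seq_ind (u0 u1 : {poly int}) (c : nat -> nat -> nat -> int) :
  (forall i, u0`_i = c 0%N 0%N i) -> (forall i, u1`_i = c 1%N 1%N i) ->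
  (forall n, c n.*2.+2 n.+1 0%N = (N + n.*2.+2)%:R * c n.*2.+1 n.+1 0%N) ->
  (forall n i, c n.*2.+2 n.+1 i.+1 =
     (N + n.*2.+2)%:R * c n.*2.+1 n.+1 i.+1 + (n.+1)%:R * c n.*2 n i) ->
  (forall n, c n.*2.+3 n.+2 0%N = (N + n.*2.+3)%:R * c n.*2.+2 n.+1 0%N) ->
  (forall n i, c n.*2.+3 n.+2 i.+1 =
     (N + n.*2.+3)%:R * c n.*2.+2 n.+1 i.+1 - (N + n.+1)%:R * c n.*2.+1 n.+1 i) ->
  forall n, (forall i, (cf_rec N u0 u1 n.*2).1`_i = c n.*2 n i) /\
            (forall i, (cf_rec N u0 u1 n.*2.+1).1`_i = c n.*2.+1 n.+1 i).
Proof.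
move=> h0 h1 he0 he ho0 ho; elim=> [|n [IH0 IH1]]; first by split.
have E : forall i, (cf_rec N u0 u1 n.*2.+2).1`_i = c n.*2.+2 n.+1 i.
  move=> i; rewrite cf_recS coefD coef_a coef_b_even IH1.
  by case: i => [|i]; rewrite ?addr0 ?he0 ?he ?IH0.
split; first by move=> i; rewrite doubleS E.
move=> i; rewrite doubleS cf_recS coefD coef_a coef_b_odd E.
case: i => [|i]; first by rewrite addr0 ho0.
by rewrite IH1 ho mulNr.
Qed.

Lemma coef_eq (p : {poly int}) M (F : 'I_M -> int) (c : nat -> int) :
  (forall i, p`_i = c i) -> (forall j : 'I_M, F j = c j) ->
  (forall i, (M <= i)%N -> c i = 0) -> p = \sum_(j < M) F j *: 'X^j.
Proof.
move=> hp hF hc; apply/polyP => i; rewrite hp coef_sum.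
under eq_bigr do rewrite coefZ coefXn.
case: (ltnP i M) => hi.
- rewrite (bigD1 (Ordinal hi)) //= eqxx mulr1 big1 ?addr0 ?hF // => j hj.
  rewrite (_ : (i == j) = false) ?mulr0 //; apply/negbTE.
  by apply: contra hj => /eqP e; apply/eqP/val_inj; rewrite /= e.
- rewrite hc // big1 // => j _; rewrite (_ : (i == j) = false) ?mulr0 //.
  by apply/negbTE; rewrite neq_ltn (leq_trans (ltn_ord j) hi) orbT.
Qed.

Lemma P_all n : (forall i, (cfP N n.*2)`_i = pc n.*2 n i) /\
            (forall i, (cfP N n.*2.+1)`_i = pc n.*2.+1 n.+1 i).
Proof.
apply: seq_ind.
- move=> i; rewrite coef1 /pc; case: i => [|i] /=; first by rewrite Rp_nil.
  by rewrite bin0n mul0n mulr0.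
- move=> i; rewrite coefB coefX coefMn coef1 /pc.
  case: i => [|[|i]] /=.
  + by rewrite !subr0 expr0 mul1r bin0 mul1n /Rp big_nat1.
  + by rewrite mul0rn sub0r expr1 bin1 Rp_nil // mulN1r.
  + by rewrite bin_small // mul0n mulr0 mul0rn subr0.
- by move=> n'; rewrite !pc0 RpS // natrM mulrC.
- exact: pcI.
- by move=> n'; rewrite !pc0 RpS // natrM mulrC.
- exact: pcII.
Qed.

Lemma Q_all n : (forall i, (cfQ N n.*2)`_i = qc n.*2 n i) /\
            (forall i, (cfQ N n.*2.+1)`_i = qc n.*2.+1 n.+1 i).
Proof.
apply: seq_ind.
- move=> i; rewrite coef1; case: i => [|i] /=; first by rewrite qc0 Rp_nil.
  by rewrite qc_vanish.
- move=> i; rewrite coefMn coef1.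
  case: i => [|i] /=; first by rewrite qc0 /Rp big_nat1.
  by rewrite qc_vanish // mul0rn.
- by move=> n'; rewrite !qc0 RpS // natrM mulrC.
- exact: qcI.
- by move=> n'; rewrite !qc0 RpS // natrM mulrC.
- exact: qcII.
Qed.

End Aux.


Theorem theorem4 (N : nat) (hN : (0 < N)%N) (n : nat) (hn : (1 <= n)%N) :
  [/\ cfP N (2 * n - 1) =
        \sum_(j < n.+1)
          ((-1) ^+ j * ('C(n, j) * \prod_(1 <= l < (2 * n - j - 1).+1) (N + l))%:R)
            *: 'X^j,
      cfP N (2 * n) =
        \sum_(j < n.+1)
          ((-1) ^+ j * ('C(n, j) * \prod_(1 <= l < (2 * n - j).+1) (N + l))%:R)
            *: 'X^j,
      cfQ N (2 * n - 1) =
        \sum_(j < n) \sum_(k < j.+1)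
          ((-1) ^+ (j - k) * ((2 * n - j - 1) ^_ k * 'C(n - k - 1, j - k)
              * \prod_(k.+1 <= l < (2 * n - j - 1).+1) (N + l))%:R) *: 'X^j
    & cfQ N (2 * n) =
        \sum_(j < n.+1) \sum_(k < j.+1)
          ((-1) ^+ (j - k) * ((2 * n - j) ^_ k * 'C(n - k - 1, j - k)
              * \prod_(k.+1 <= l < (2 * n - j).+1) (N + l))%:R) *: 'X^j].
Proof.
case: n hn => // n _.
have h1 : (2 * n.+1 - 1 = n.*2.+1)%N by lia.
have h2 : (2 * n.+1 = n.*2.+2)%N by lia.
have [P1 _] : _ /\ _ := P_all N n.+1.
have [_ P0] := P_all N n.
have [Q1 _] : _ /\ _ := Q_all N n.+1.
have [_ Q0] := Q_all N n.
rewrite doubleS in P1 Q1.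
rewrite h1 h2.
split.
- apply: (@coef_eq _ _ _ (pc N n.*2.+1 n.+1)) => [// | i | i hi].
    by rewrite /pc (_ : (n.*2.+2 - i - 1 = n.*2.+1 - i)%N) //; lia.
  by rewrite /pc bin_small // mul0n mulr0.
- apply: (@coef_eq _ _ _ (pc N n.*2.+2 n.+1)) => [// | i | i hi].
    by [].
  by rewrite /pc bin_small // mul0n mulr0.
- under eq_bigr do rewrite -scaler_suml.
  apply: (@coef_eq _ _ _ (qc N n.*2.+1 n.+1)) => [// | i | i hi].
    rewrite /qc big_mkord (_ : (n.*2.+2 - i - 1 = n.*2.+1 - i)%N) //; lia.
  by rewrite qc_vanish //; lia.
- under eq_bigr do rewrite -scaler_suml.
  apply: (@coef_eq _ _ _ (qc N n.*2.+2 n.+1)) => [// | i | i hi].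
    by rewrite /qc big_mkord.
  by rewrite qc_vanish //; lia.
Qed.
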